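(* Let $k\ge d$ and $(\mathbf x_1,\dots,\mathbf x_k)\sim\mathrm{VS}_{D_{\mathcal X}}^k$, with $\mathbf X\in\mathbb R^{k\times d}$ the matrix with rows $\mathbf x_i^\top$. Given $\mathbf X$, choose a subset $S\subseteq\{1,\dots,k\}$ with $|S|=d$ by standard volume sampling, i.e. with probability $\det(\mathbf X_S)^2/\det(\mathbf X^\top\mathbf X)$, and list the points $\{\mathbf x_i\}_{i\in S}$ in uniformly random order as $(\mathbf x_{i_1},\dots,\mathbf x_{i_d})$. Then $(\mathbf x_{i_1},\dots,\mathbf x_{i_d})\sim\mathrm{VS}_{D_{\mathcal X}}^d$.
   Context: $D_{\mathcal X}$ is a probability distribution on $\mathbb R^d$ with $\mathbb E\|\mathbf x\|^2<\infty$ and invertible $\boldsymbol\Sigma_{D_{\mathcal X}}:=\mathbb E[\mathbf x\mathbf x^\top]$; $D_{\mathcal X}^k$ is the law of $k$ i.i.d. draws. For $k\ge d$, $\mathrm{VS}_{D_{\mathcal X}}^k(A)=\mathbb E_{D_{\mathcal X}^k}[\mathbf 1_A\det(\sum_{i=1}^k\mathbf x_i\mathbf x_i^\top)]/\big(d!\binom kd\det(\boldsymbol\Sigma_{D_{\mathcal X}})\big)$. $\mathbf X_S$ is the $d\times d$ submatrix of rows indexed by $S$. (Under $\mathrm{VS}_{D_{\mathcal X}}^k$, $\det(\mathbf X^\top\mathbf X)>0$ almost surely.) *)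

(* Defs.v *)
From HB Require Import structures.
From mathcomp Require Import all_boot all_order all_algebra all_fingroup.
From mathcomp Require Import all_classical all_reals all_analysis.
Set Implicit Arguments. Unset Strict Implicit. Unset Printing Implicit Defensive.
Import Order.TTheory GRing.Theory Num.Theory.
Local Open Scope classical_set_scope.
Local Open Scope ring_scope.

(* Points of R^d are d-tuples of reals (product sigma-algebra on tuples);
   a sample of k points is a k-tuple of such points. *)
Notation vec R d := (d.-tuple R).
Notation sample R d k := (k.-tuple (d.-tuple R)).

Definition datamx {R : realType} {d k : nat} (X : sample R d k) : 'M[R]_(k, d) :=
  \matrix_(i < k, j < d) tnth (tnth X i) j.

Definition second_moment {R : realType} {d : nat}
  (D : probability (vec R d) R) : 'M[R]_d :=
  \matrix_(a < d, b < d) fine (\int[D]_x (tnth x a * tnth x b)%:E)%E.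

(* Dk is the law D^k of k i.i.d. draws from D: it is the product measure,
   characterised on measurable rectangles. *)
Definition is_iid_law {R : realType} {d k : nat}
  (D : probability (vec R d) R) (Dk : probability (sample R d k) R) : Prop :=
  forall A : 'I_k -> set (vec R d), (forall i, measurable (A i)) ->
    Dk [set X | forall i, A i (tnth X i)] = (\prod_(i < k) D (A i))%E.

Definition VS {R : realType} {d k : nat} (D : probability (vec R d) R)
  (Dk : probability (sample R d k) R) (A : set (sample R d k)) : \bar R :=
  ((\int[Dk]_(X in A) (\det ((datamx X)^T *m datamx X))%:E) *
   (((d`! * 'C(k, d))%:R * \det (second_moment D))^-1)%:E)%E.

(* Increasing maps 'I_d -> 'I_k, i.e. d-subsets S of {1..k} listed in order. *)
Definition increasing {d k : nat} (f : {ffun 'I_d -> 'I_k}) : bool :=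
  [forall i : 'I_d, forall j : 'I_d, (i < j)%N ==> (f i < f j)%N].

Definition submx_rows {R : realType} {d k : nat} (X : sample R d k)
  (f : {ffun 'I_d -> 'I_k}) : 'M[R]_d :=
  \matrix_(i < d, j < d) datamx X (f i) j.

(* Given X, probability that the output (x_{i_1},...,x_{i_d}) lies in B:
   pick S with probability det(X_S)^2/det(X^T X), then a uniformly random
   ordering sigma of S (probability 1/d! each). *)
Definition select_prob {R : realType} {d k : nat} (X : sample R d k)
  (B : set (sample R d d)) : R :=
  \sum_(f : {ffun 'I_d -> 'I_k} | increasing f)
     (\det (submx_rows X f) ^+ 2 / \det ((datamx X)^T *m datamx X)) *
     (d`!%:R^-1 *
      \sum_(s : 'S_d) \1_B [tuple tnth X (f (s i)) | i < d]).

(* Main.v *)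
Require Import Defs.
From HB Require Import structures.
From mathcomp Require Import all_boot all_order all_algebra all_fingroup.
From mathcomp Require Import all_classical all_reals all_analysis.
From mathcomp Require Import measurable_realfun.
Set Implicit Arguments. Unset Strict Implicit. Unset Printing Implicit Defensive.
Import Order.TTheory GRing.Theory Num.Theory.
Local Open Scope classical_set_scope.
Local Open Scope ring_scope.

Section density.
Local Open Scope ereal_scope.
Context d (T : measurableType d) (R : realType).
Variables (mu nu : {measure set T -> \bar R}) (g0 : T -> R).
Hypothesis g0_ge0 : forall x, (0 <= g0 x)%R.
Hypothesis mg0 : measurable_fun setT g0.
Hypothesis hnu : forall A, measurable A -> nu A = \int[mu]_(x in A) (g0 x)%:E.

Import HBNNSimple.

Lemma density_change (f : T -> \bar R) E : (forall x, 0 <= f x) ->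
    measurable E -> measurable_fun E f ->
  \int[mu]_(x in E) (f x * (g0 x)%:E) = \int[nu]_(x in E) f x.
Proof.
move=> f0 mE mf; set g := fun x => (g0 x)%:E.
have mg : measurable_fun setT g by exact/measurable_EFinP.
pose h := nnsfun_approx mE mf.
have -> : \int[nu]_(x in E) f x =
    lim (\int[nu]_(x in E) (EFin \o h n) x @[n --> \oo]).
  have fE x : E x -> f x = lim ((EFin \o h n) x @[n --> \oo]).
    by move=> Ex; apply/esym/cvg_lim => //; exact: cvg_nnsfun_approx.
  under eq_integral => x /[!inE] /fE -> //.
  apply: monotone_convergence => //.
  - move=> n; apply/measurable_EFinP.
    by apply: (measurable_funS measurableT) => //; exact/measurable_funP.
  - by move=> n x Ex //=; rewrite lee_fin.
  - by move=> x Ex a b ab; rewrite lee_fin; exact/lefP/nd_nnsfun_approx.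
have -> : \int[mu]_(x in E) (f x * g x) =
    lim (\int[mu]_(x in E) ((EFin \o h n) \* g) x @[n --> \oo]).
  have fg x : E x -> f x * g x = lim (((EFin \o h n) \* g) x @[n --> \oo]).
    by move=> Ex; apply/esym/cvg_lim => //; apply: cvgeZr;
      [by []|exact: cvg_nnsfun_approx].
  under eq_integral => x /[!inE] /fg -> //.
  apply: monotone_convergence => [//| | |].
  - move=> n; apply/emeasurable_funM; apply/measurable_funTS.
      exact/measurable_EFinP.
    exact: mg.
  - by move=> n x Ex /=; rewrite mule_ge0 ?lee_fin.
  - by move=> x Ex a b ab/=; rewrite lee_wpmul2r ?lee_fin//; exact/lefP/nd_nnsfun_approx.
suff suf n : \int[mu]_(x in E) ((EFin \o h n) x * g x) =
    \int[nu]_(x in E) (EFin \o h n) x.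
  by under eq_fun do rewrite suf.
transitivity (\int[nu]_(x in E)
   (\sum_(y \in range (h n)) (y * \1_(h n @^-1` [set y]) x)%:E)); last first.
  by apply: eq_integral => t tE; rewrite /= fimfunE -fsumEFin.
have indich m r : measurable_fun E (fun x => (r * \1_(h m @^-1` [set r]) x)%:E).
  by apply: (measurable_comp measurableT) => //; exact: measurable_funM.
rewrite ge0_integral_fsum//; last by move=> m y Ey; exact: nnfun_muleindic_ge0.
transitivity (\int[mu]_(x in E) (\sum_(y \in range (h n))
    (y * \1_(h n @^-1` [set y]) x)%:E * g x)).
  under [RHS]eq_integral => x xE.
    rewrite -ge0_mule_fsuml => [|y]; last by rewrite EFinM; exact: nnfun_muleindic_ge0.
    rewrite fsumEFin // -(fimfunE _ x); over.
  by [].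
rewrite ge0_integral_fsum//; last 2 first.
  - move=> y; apply: emeasurable_funM => //; apply: measurable_funTS.
    exact: mg.
  - by move=> m y Ey; rewrite mule_ge0 //; [rewrite EFinM; exact: nnfun_muleindic_ge0 | rewrite lee_fin].
apply: eq_fsbigr => r rhn.
under [RHS]eq_integral do rewrite EFinM.
rewrite integralZl_indic_nnsfun => //.
under eq_integral do rewrite EFinM -muleA.
rewrite ge0_integralZl//.
- under eq_integral do rewrite muleC.
  rewrite (eq_integral (g \_ (h n @^-1` [set r]))); last first.
    by move=> x xE; rewrite epatch_indic.
  by rewrite -integral_mkcondr -hnu// integral_indic// setIC.
- apply: emeasurable_funM; first exact/measurable_EFinP.
  exact/measurable_funTS/mg.
- by move=> t Et; rewrite mule_ge0 ?lee_fin.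
- by move: rhn; rewrite inE => -[t _ <-]; rewrite lee_fin.
Qed.

End density.

Section meas.
Context (R : realType).

Lemma measurable_det dd (T : measurableType dd) n (M : T -> 'M[R]_n) :
  (forall i j, measurable_fun setT (fun x => M x i j)) ->
  measurable_fun setT (fun x => \det (M x)).
Proof.
move=> hM; rewrite /determinant.
apply: measurable_sum => s; apply: measurable_funM; first exact: measurable_cst.
by apply: measurable_prod => i _; exact: hM.
Qed.

Lemma measurable_entry d k (i : 'I_k) (j : 'I_d) :
  measurable_fun setT (fun X : sample R d k => datamx X i j).
Proof.
rewrite /datamx; under eq_fun do rewrite mxE.
exact: (measurableT_comp (measurable_tnth j) (measurable_tnth i)).
Qed.

Lemma measurable_gram d k :
  measurable_fun setT (fun X : sample R d k => \det ((datamx X)^T *m datamx X)).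
Proof.
apply: measurable_det => a b.
under eq_fun do rewrite mxE.
apply: measurable_sum => i; under eq_fun do rewrite mxE.
by apply: measurable_funM; exact: measurable_entry.
Qed.

Definition sel d k (h : 'I_d -> 'I_k) (X : sample R d k) : sample R d d :=
  [tuple tnth X (h i) | i < d].

Lemma measurable_sel d k (h : 'I_d -> 'I_k) : measurable_fun setT (sel h).
Proof.
apply/measurable_fun_tnthP => i.
rewrite (_ : _ \o _ = fun X => tnth X (h i)); first exact: measurable_tnth.
by apply/funext => X /=; rewrite tnth_mktuple.
Qed.

Lemma submx_sel d k (X : sample R d k) (f : {ffun 'I_d -> 'I_k}) :
  submx_rows X f = datamx (sel f X).
Proof. by apply/matrixP => i j; rewrite !mxE tnth_mktuple. Qed.

Lemma gram_sq d (Y : sample R d d) :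
  \det ((datamx Y)^T *m datamx Y) = \det (datamx Y) ^+ 2.
Proof. by rewrite det_mulmx det_tr expr2. Qed.

End meas.

Section push.
Context (R : realType) (d k : nat) (D : probability (vec R d) R)
  (Dk : probability (sample R d k) R) (Dd : probability (sample R d d) R).
Hypotheses (hk : is_iid_law D Dk) (hd : is_iid_law D Dd).
Variable h : 'I_d -> 'I_k.
Hypothesis hinj : injective h.

Let pm := measure_function_pushforward__canonical__measure_function_Measure
   Dk (measurable_sel h).

Lemma rect_sel (A : 'I_d -> set (vec R d)) : (forall i, measurable (A i)) ->
  Dk (sel h @^-1` [set Y | forall i, A i (tnth Y i)]) =
  Dd [set Y | forall i, A i (tnth Y i)].
Proof.
move=> mA; rewrite hd //.
pose A' (j : 'I_k) := if [pick i | h i == j] is Some i then A i else setT.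
have -> : sel h @^-1` [set Y | forall i, A i (tnth Y i)] =
    [set X | forall j, A' j (tnth X j)].
  apply/seteqP; split => X /= HX.
  - move=> j; rewrite /A'; case: pickP => [i /eqP <-|//].
    by have := HX i; rewrite /sel tnth_mktuple.
  - move=> i; rewrite /sel tnth_mktuple; have := HX (h i); rewrite /A'.
    case: pickP => [i' /eqP /hinj -> //|/(_ i)].
    by rewrite eqxx.
rewrite hk; last by move=> j; rewrite /A'; case: pickP => // _ _; exact: measurableT.
rewrite (partition_big h xpredT) //=.
apply: eq_bigr => j _; rewrite /A'; case: pickP => [i /eqP hij|h0].
- by rewrite (big_pred1 i) // => i' /=; rewrite -hij (inj_eq hinj).
- by rewrite big_pred0 ?probability_setT // => i' /=; rewrite h0.
Qed.

Lemma sel_push A : measurable A -> Dk (sel h @^-1` A) = Dd A.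
Proof.
move=> mA.
pose G := [set S : set (sample R d d) | exists A : 'I_d -> set (vec R d),
  (forall i, measurable (A i)) /\ S = [set Y | forall i, A i (tnth Y i)]].
change (pm A = Dd A).
have mG : measurable = <<s G >>.
  apply/seteqP; split.
  + change (g_sigma_preimage (fun i (x : sample R d d) => tnth x i) `<=` <<s G >>).
    apply: smallest_sub; first exact: smallest_sigma_algebra.
    apply: (big_ind (fun U : set (set (sample R d d)) => U `<=` <<s G >>)).
    * exact: sub0set.
    * by move=> X Y HX HY Z [/HX|/HY].
    * move=> i _ _ [B mB <-]; apply: sub_sigma_algebra.
      exists (fun j => if j == i then B else setT); split.
        by move=> j; case: ifP.
      apply/seteqP; split => Y /=.
      -- by move=> [_ HB] j; case: eqP => [->//|//].
      -- by move=> H; split => //; have := H i; rewrite eqxx.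
  + apply: smallest_sub; first exact: sigma_algebra_measurable.
    move=> _ [A0 [mA0 ->]].
    have -> : [set Y : sample R d d | forall i, A0 i (tnth Y i)] =
        \big[setI/setT]_(i <- enum 'I_d) ((fun Y : sample R d d => tnth Y i) @^-1` A0 i).
      rewrite -bigcap_seq; apply/seteqP; split => Y /=.
      * by move=> H i _; exact: H.
      * by move=> H i; apply: H; rewrite /= mem_enum.
    apply: bigsetI_measurable => i _.
    by rewrite -[X in measurable X]setTI; apply: measurable_tnth.
have sIG : setI_closed G.
  move=> _ _ [A1 [m1 ->]] [A2 [m2 ->]].
  exists (fun i => A1 i `&` A2 i); split.
    by move=> i; exact: measurableI.
  apply/seteqP; split => Y /=.
  + by move=> [H1 H2] i; split.
  + by move=> H; split => i; have [] := H i.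
have GT : forall n : nat, G setT.
  move=> _; exists (fun=> setT); split => //.
  by apply/seteqP; split.
have cov : \bigcup_(n : nat) (setT : set (sample R d d)) = setT.
  by apply/seteqP; split => // x _; exists 0%N.
have m12 : forall S, G S -> pm S = Dd S.
  by move=> _ [A0 [mA0 ->]]; exact: rect_sel.
have fin : forall n : nat, (pm setT < +oo)%E.
  by move=> _; change (Dk setT < +oo)%E; rewrite probability_setT ltry.
exact: (measure_unique G (fun _ => setT) mG sIG GT cov pm Dd m12 fin A mA).
Qed.

Lemma sel_integral (F : sample R d d -> \bar R) :
  measurable_fun setT F -> (forall Y, 0 <= F Y)%E ->
  (\int[Dk]_X F (sel h X) = \int[Dd]_Y F Y)%E.
Proof.
move=> mF F0.
transitivity (\int[pm]_Y F Y)%E; last first.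
  by apply: eq_measure_integral => A mA _; exact: sel_push.
by rewrite /pm (ge0_integral_pushforward (measurable_sel h)).
Qed.

End push.

Section alg.
Context (R : realType).

Lemma measurable_inv : measurable_fun setT (@GRing.inv R).
Proof.
rewrite -(setUv [set (0:R)]).
apply/(measurable_funU _ (measurable_set1 0) (measurableC (measurable_set1 0))).
split; first exact: measurable_fun_set1.
apply: open_continuous_measurable_fun.
  exact/closed_openC/accessible_closed_set1/hausdorff_accessible/Rhausdorff.
move=> x; rewrite inE /= => x0; apply: inv_continuous; exact/eqP.
Qed.

Lemma sum_sq_eq0 n (w : 'I_n -> R) : \sum_i w i ^+ 2 = 0 -> forall i, w i = 0.
Proof.
move=> hs i; apply/eqP; rewrite -sqrf_eq0; apply/eqP.
by apply: (psumr_eq0P (P := xpredT) (F := fun i => w i ^+ 2)) => // j _; exact: sqr_ge0.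
Qed.

Lemma gram0_sub (d k : nat) (X : sample R d k) (f : {ffun 'I_d -> 'I_k}) :
  \det ((datamx X)^T *m datamx X) = 0 -> \det (submx_rows X f) = 0.
Proof.
move/eqP/det0P => [v v0 hv].
set M := datamx X.
set w := M *m v^T.
have hw : w^T *m w = 0.
  by rewrite /w trmx_mul trmxK mulmxA -(mulmxA v) hv !mul0mx.
have w0 : forall i, w i 0 = 0.
  apply: sum_sq_eq0.
  have hs := congr1 (fun A : 'M[R]_1 => A 0 0) hw; rewrite /= !mxE in hs.
  rewrite -[RHS]hs.
  by apply: eq_bigr => j _; rewrite !mxE expr2.
have hf : v *m (submx_rows X f)^T = 0.
  apply/matrixP => a b; rewrite !mxE (ord1 a).
  transitivity (w (f b) 0); last exact: w0.
  by rewrite /w mxE; apply: eq_bigr => j _; rewrite !mxE mulrC.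
by apply/eqP; rewrite -det_tr; apply/det0P; exists v.
Qed.

Lemma gram_row_ge0 k d (u : 'cV[R]_k) (N : 'M[R]_(k, d)) :
  (forall N' : 'M[R]_(k, d), 0 <= \det (N'^T *m N')) ->
  0 <= \det ((row_mx u N)^T *m row_mx u N).
Proof.
move=> IH.
set a := (u^T *m u) 0 0.
have a_ge0 : 0 <= a.
  by rewrite /a mxE; apply: sumr_ge0 => i _; rewrite mxE -expr2 sqr_ge0.
have [a0|a0] := eqVneq a 0.
  have u0 : u = 0.
    apply/matrixP => i j; rewrite (ord1 j) [RHS]mxE.
    apply: (@sum_sq_eq0 _ (fun i => u i 0)).
    rewrite -[RHS]a0 /a mxE; apply: eq_bigr => l _; by rewrite mxE expr2.
  rewrite u0 tr_row_mx mul_col_row trmx0 !mul0mx mulmx0 det_lblock det0 mul0r.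
  exact: lexx.
set Ur := - (a^-1 *: (u^T *m N)).
set N' := u *m Ur + N.
have E1 : row_mx u N *m block_mx 1 Ur 0 1 = row_mx u N'.
  by rewrite mul_row_block !mulmx1 !mulmx0 addr0.
have detE : \det (block_mx (1 : 'M[R]_1) Ur 0 (1 : 'M[R]_d)) = 1.
  by rewrite det_ublock !det1 mulr1.
have <- : \det ((row_mx u N')^T *m row_mx u N') =
    \det ((row_mx u N)^T *m row_mx u N).
  by rewrite -E1 trmx_mul !mulmxA -(mulmxA (_^T) (_^T)) !det_mulmx det_tr detE mul1r mulr1.
rewrite tr_row_mx mul_col_row.
have -> : u^T *m N' = 0.
  rewrite /N' mulmxDr mulmxA [u^T *m u]mx11_scalar -/a mul_scalar_mx /Ur.
  by rewrite scalerN scalerA mulfV // scale1r addNr.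
rewrite det_lblock det_mx11 -/a.
exact: mulr_ge0.
Qed.

Lemma gram_ge0 k d (M : 'M[R]_(k, d)) : 0 <= \det (M^T *m M).
Proof.
elim: d M => [|d IH] M; first by rewrite det_mx00.
have := @gram_row_ge0 k d (lsubmx (M : 'M[R]_(k, 1 + d))) (rsubmx (M : 'M[R]_(k, 1 + d))) IH.
by rewrite hsubmxK.
Qed.

Lemma det_sel_perm d k (X : sample R d k) (f : 'I_d -> 'I_k) (s : 'S_d) :
  \det (datamx (sel (fun i => f (s i)) X)) ^+ 2 = \det (datamx (sel f X)) ^+ 2.
Proof.
have -> : datamx (sel (fun i => f (s i)) X) = row_perm s (datamx (sel f X)).
  by apply/matrixP => i j; rewrite !mxE !tnth_mktuple.
by rewrite row_permE det_mulmx det_perm exprMn -exprM mulnC exprM sqrrN !expr1n mul1r.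
Qed.

End alg.

Lemma sorted_tupleP n m (t : n.-tuple 'I_m) :
  sorted ltn (map val t) =
  [forall i : 'I_n, forall j : 'I_n, (i < j)%N ==> (tnth t i < tnth t j)%N].
Proof.
rewrite sorted_pairwise; last exact: ltn_trans.
apply/(pairwiseP 0%N)/forallP => [H i|H i j].
- apply/forallP => j; apply/implyP => ij.
  have := H i j. rewrite size_map size_tuple. move=> /(_ (ltn_ord i) (ltn_ord j) ij).
  rewrite !(nth_map (tnth t i)) ?size_tuple ?ltn_ord //. by rewrite -!tnth_nth.
- rewrite size_map size_tuple => hi hj ij.
  have h := implyP (forallP (H (Ordinal hi)) (Ordinal hj)) ij.
  pose x0 := tnth t (Ordinal hi).
  rewrite !(tnth_nth x0) in h.
  rewrite !(nth_map x0) ?size_tuple //.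
Qed.

Lemma card_increasing d k :
  #|[pred f : {ffun 'I_d -> 'I_k} | increasing f]| = 'C(k, d).
Proof.
rewrite -card_ltn_sorted_tuples.
pose phi (f : {ffun 'I_d -> 'I_k}) : d.-tuple 'I_k := [tuple f i | i < d].
have phi_inj : injective phi.
  move=> f1 f2 h; apply/ffunP => i.
  by have := congr1 (fun t => tnth t i) h; rewrite /= !tnth_mktuple.
rewrite -(card_imset _ phi_inj); apply: eq_card => t.
rewrite inE sorted_tupleP; apply/imsetP/idP.
- case=> f; rewrite inE => /forallP incf ->.
  apply/forallP => i; apply/forallP => j; rewrite !tnth_mktuple.
  exact: (forallP (incf i) j).
- move=> /forallP H; exists [ffun i => tnth t i].
    rewrite inE; apply/forallP => i; apply/forallP => j; rewrite !ffunE.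
    exact: (forallP (H i) j).
  by apply: eq_from_tnth => i; rewrite tnth_mktuple ffunE.
Qed.

Lemma sum_increasing (R : realType) d k :
  \sum_(f : {ffun 'I_d -> 'I_k} | increasing f) (1 : R) = 'C(k, d)%:R.
Proof.
rewrite (eq_bigl (fun f => f \in [pred f : {ffun 'I_d -> 'I_k} | increasing f])); last first.
  by move=> f; rewrite inE.
by rewrite sumr_const card_increasing.
Qed.

Lemma increasing_inj d k (f : {ffun 'I_d -> 'I_k}) : increasing f -> injective f.
Proof.
move=> /forallP H i j fij; apply: val_inj => /=.
case: (ltngtP i j) => // ij.
- by move: (implyP (forallP (H i) j) ij); rewrite fij ltnn.
- by move: (implyP (forallP (H j) i) ij); rewrite fij ltnn.
Qed.


Section chain.
Context (R : realType) (d k : nat) (D : probability (vec R d) R)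
  (Dk : probability (sample R d k) R) (Dd : probability (sample R d d) R).
Hypotheses (hk : is_iid_law D Dk) (hd : is_iid_law D Dd).
Variable B : set (sample R d d).
Hypothesis mB : measurable B.

Definition FB (Y : sample R d d) : R := \det (datamx Y) ^+ 2 * \1_B Y.

Lemma FB_ge0 Y : 0 <= FB Y.
Proof. by rewrite /FB mulr_ge0 ?sqr_ge0 // indicE ler0n. Qed.

Lemma measurable_FB : measurable_fun setT FB.
Proof.
apply: measurable_funM; last exact: measurable_indic.
apply: measurable_funX; apply: measurable_det => i j; exact: measurable_entry.
Qed.

Definition QB (X : sample R d k) : R :=
  \sum_(f : {ffun 'I_d -> 'I_k} | increasing f) \sum_(s : 'S_d)
     (d`!%:R^-1 * FB (sel (fun i => f (s i)) X)).

Lemma gram_select (X : sample R d k) :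
  \det ((datamx X)^T *m datamx X) * select_prob X B = QB X.
Proof.
rewrite /select_prob /QB mulr_sumr; apply: eq_bigr => f _.
set g := \det ((datamx X)^T *m datamx X).
set a := \det (submx_rows X f) ^+ 2.
have ha : forall s : 'S_d, \det (datamx (sel (fun i => f (s i)) X)) ^+ 2 = a.
  by move=> s; rewrite det_sel_perm -submx_sel.
under [RHS]eq_bigr => s _ do rewrite /FB ha.
rewrite -!mulr_sumr.
have [g0|g0] := eqVneq g 0.
  by rewrite g0 mul0r /a gram0_sub // expr2 !mul0r mulr0.
by rewrite mulrA [g * _]mulrC divfK // mulrCA.
Qed.

Lemma select_prob_ge0 (X : sample R d k) : 0 <= select_prob X B.
Proof.
rewrite /select_prob; apply: sumr_ge0 => f _; apply: mulr_ge0.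
  by apply: divr_ge0; [exact: sqr_ge0 | exact: gram_ge0].
apply: mulr_ge0; first by rewrite invr_ge0 ler0n.
by apply: sumr_ge0 => s _; rewrite indicE ler0n.
Qed.

Lemma measurable_select_prob :
  measurable_fun setT (fun X : sample R d k => select_prob X B).
Proof.
rewrite /select_prob.
under eq_fun do rewrite big_mkcond /=.
apply: measurable_sum => f; case: (increasing f); last exact: measurable_cst.
apply: measurable_funM.
  apply: measurable_funM.
    apply: measurable_funX; apply: measurable_det => i j.
    under eq_fun do rewrite mxE.
    exact: measurable_entry.
  have h1 := @measurable_inv R. have h2 := @measurable_gram R d k.
  exact: (measurableT_comp h1 h2).
apply: measurable_funM; first exact: measurable_cst.
apply: measurable_sum => s.
exact: (measurableT_comp (measurable_indic mB) (measurable_sel (fun i => f (s i)))).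
Qed.

Lemma term_integral (h : 'I_d -> 'I_k) (c : R) : injective h -> 0 <= c ->
  (\int[Dk]_X (c * FB (sel h X))%:E = c%:E * \int[Dd]_Y (FB Y)%:E)%E.
Proof.
move=> hinj c0.
have mT : measurable_fun setT (fun X => (FB (sel h X))%:E).
  by apply/measurable_EFinP; exact: (measurableT_comp measurable_FB (measurable_sel h)).
have T0 : forall X, setT X -> (0 <= (FB (sel h X))%:E)%E.
  by move=> X _; rewrite lee_fin FB_ge0.
under eq_integral do rewrite EFinM.
rewrite ge0_integralZl_EFin //; try exact: mT; try exact: T0.
have mF : measurable_fun setT (fun Y => (FB Y)%:E) by apply/measurable_EFinP; exact: measurable_FB.
have F0 : forall Y, (0 <= (FB Y)%:E)%E by move=> Y; rewrite lee_fin FB_ge0.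
by rewrite (sel_integral hk hd hinj mF F0).
Qed.

Lemma QB_integral :
  (\int[Dk]_X (QB X)%:E = ('C(k, d)%:R)%:E * \int[Dd]_Y (FB Y)%:E)%E.
Proof.
set I := (\int[Dd]_Y (FB Y)%:E)%E.
have cge0 : 0 <= d`!%:R^-1 :> R by rewrite invr_ge0 ler0n.
pose T (f : {ffun 'I_d -> 'I_k}) (s : 'S_d) X :=
  (d`!%:R^-1 * FB (sel (fun i => f (s i)) X))%:E.
have HQ : forall X, (QB X)%:E =
    (\sum_(f : {ffun 'I_d -> 'I_k})
      (if increasing f then \sum_(s : 'S_d) T f s X else 0))%E.
  move=> X; rewrite /QB big_mkcond -sumEFin; apply: eq_bigr => f _.
  by case: ifP => _ //; rewrite sumEFin.
have mT : forall f s, measurable_fun setT (T f s).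
  move=> f s; apply/measurable_EFinP; apply: measurable_funM.
    exact: measurable_cst.
  exact: (measurableT_comp measurable_FB (measurable_sel _)).
have T0 : forall f s X, setT X -> (0 <= T f s X)%E.
  by move=> f s X _; rewrite lee_fin mulr_ge0 // FB_ge0.
have mS : forall f : {ffun 'I_d -> 'I_k}, measurable_fun setT
    (fun X => if increasing f then (\sum_(s : 'S_d) T f s X)%E else 0%E).
  move=> f; case: (increasing f); last exact: measurable_cst.
  exact: emeasurable_sum.
have S0 : forall (f : {ffun 'I_d -> 'I_k}) X, setT X ->
    (0 <= if increasing f then (\sum_(s : 'S_d) T f s X)%E else 0%E)%E.
  move=> f X _; case: (increasing f) => //.
  by apply: sume_ge0 => s _; exact: T0.
under eq_integral => X _ do rewrite HQ.
rewrite ge0_integral_sum //; try exact: mS; try exact: S0.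
transitivity (\sum_(f : {ffun 'I_d -> 'I_k} | increasing f) I)%E.
  rewrite [RHS]big_mkcond; apply: eq_bigr => f _.
  case: ifP => incf; last exact: integral0.
  rewrite ge0_integral_sum //; try exact: (mT f); try exact: (T0 f).
  transitivity (\sum_(s : 'S_d) ((d`!%:R^-1)%:E * I))%E.
    apply: eq_bigr => s _; apply: term_integral => //.
    by move=> i j /(increasing_inj incf) /perm_inj.
  rewrite -ge0_sume_distrl; last by move=> s _; rewrite lee_fin.
  rewrite sumEFin sumr_const (_ : #|_| = d`!); last first.
    by rewrite -(card_Sn d); apply: eq_card.
  have -> : (d`!%:R^-1 *+ d`! : R) = d`!%:R * d`!%:R^-1 by rewrite mulr_natl.
  rewrite mulfV; last by rewrite pnatr_eq0 -lt0n fact_gt0.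
  by rewrite mul1e.
under eq_bigr do rewrite -[I]mul1e.
rewrite -ge0_sume_distrl; last by move=> *; exact: lee01.
by rewrite sumEFin sum_increasing.
Qed.

End chain.

Unset Implicit Arguments.

Theorem lemma6 (R : realType) (d k : nat) (D : probability (vec R d) R)
  (Dk : probability (sample R d k) R) (Dd : probability (sample R d d) R)
  (VSk : {measure set (sample R d k) -> \bar R}) :
  (d <= k)%N ->
  (\int[D]_x (\sum_(a < d) tnth x a ^+ 2)%:E < +oo)%E ->
  second_moment D \in unitmx ->
  is_iid_law D Dk -> is_iid_law D Dd ->
  (forall A, measurable A -> VSk A = VS D Dk A) ->
  forall B : set (sample R d d), measurable B ->
    (\int[VSk]_X (select_prob X B)%:E)%E = VS D Dd B.
Proof.
move=> dk hint hS hk hd hVS B mB.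
pose c := ((d`! * 'C(k, d))%:R * \det (second_moment D))^-1 : R.
pose c' := ((d`! * 'C(d, d))%:R * \det (second_moment D))^-1 : R.
have Cn0 : ('C(k, d)%:R : R) != 0 by rewrite pnatr_eq0 -lt0n bin_gt0.
have hc : c' = 'C(k, d)%:R * c.
  rewrite /c /c' binn muln1 natrM -mulrA [('C(k, d)%:R : R) * \det _]mulrC mulrA.
  by rewrite [in RHS]invfM mulrCA mulfV // mulr1.
pose g := fun X : sample R d k => \det ((datamx X)^T *m datamx X).
have g0 : forall X, 0 <= g X by move=> X; exact: gram_ge0.
have mg : measurable_fun setT g by exact: measurable_gram.
pose sp := fun X : sample R d k => (select_prob X B)%:E.
have msp : measurable_fun setT sp.
  by apply/measurable_EFinP; exact: measurable_select_prob.
have sp0 : forall X, (0 <= sp X)%E by move=> X; rewrite lee_fin select_prob_ge0.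
have hQ : forall X, (sp X * (g X)%:E)%E = (QB B X)%:E.
  by move=> X; rewrite -EFinM mulrC gram_select.
set I := (\int[Dd]_Y (FB B Y)%:E)%E.
have hRHS : VS D Dd B = (I * c'%:E)%E.
  rewrite /VS -/c'; congr (_ * _)%E.
  rewrite integral_mkcond; apply: eq_integral => Y _.
  by rewrite epatch_indic /= /FB EFinM gram_sq.
have hchain := QB_integral hk hd mB.
have hQm : measurable_fun setT (fun X : sample R d k => (QB B X)%:E).
  have mgE : measurable_fun setT (fun X => (g X)%:E) by exact/measurable_EFinP.
  exact (eq_measurable_fun _ (fun X _ => hQ X) (emeasurable_funM msp mgE)).
have Q0 : forall X : sample R d k, setT X -> (0 <= (QB B X)%:E)%E.
  by move=> X _; rewrite -hQ mule_ge0 // lee_fin.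
case: (lerP 0 c) => c0.
- have cg0 : forall X, 0 <= c * g X by move=> X; exact: mulr_ge0.
  have mcg : measurable_fun setT (fun X => c * g X).
    by apply: measurable_funM => //; exact: measurable_cst.
  have hnu : forall A, measurable A -> VSk A = (\int[Dk]_(X in A) ((c * g X)%:E))%E.
    move=> A mA; rewrite hVS // /VS -/c muleC -ge0_integralZl_EFin //.
    all: try (by apply: eq_integral => X _; rewrite EFinM).
    all: try (by move=> X _; rewrite lee_fin g0).
    all: try (by apply/measurable_EFinP; apply: measurable_funTS).
  rewrite -(density_change cg0 mcg hnu sp0 measurableT msp).
  under eq_integral => X _ do rewrite EFinM muleCA hQ.
  rewrite ge0_integralZl_EFin //; try exact: hQm; try exact: Q0.
  rewrite hchain hRHS hc EFinM muleA [RHS]muleC (muleC c%:E).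
  by [].
- have J0 : (\int[Dk]_X (g X)%:E = 0)%E.
    have hJ := hVS setT measurableT.
    rewrite /VS -/c in hJ.
    have h1 : (0 <= VSk setT)%E by exact: measure_ge0.
    rewrite hJ in h1.
    have h2 : (\int[Dk]_X (g X)%:E * c%:E <= 0)%E.
      apply: mule_ge0_le0; first by apply: integral_ge0 => X _; rewrite lee_fin g0.
      by rewrite lee_fin ltW.
    have e : (\int[Dk]_X (g X)%:E * c%:E = 0)%E.
      by apply/eqP; rewrite eq_le h2 h1.
    move/eqP: e; rewrite mule_eq0 => /orP[/eqP -> //|/eqP ce].
    have : (c%:E < 0)%E by rewrite lte_fin.
    by rewrite ce ltxx.
  have hsub : forall A, measurable A -> (\int[Dk]_(X in A) (g X)%:E = 0)%E.
    move=> A mA; apply/eqP; rewrite eq_le; apply/andP; split.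
      rewrite -J0; apply: ge0_subset_integral => //.
        by apply/measurable_EFinP.
      by move=> X _; rewrite lee_fin g0.
    by apply: integral_ge0 => X _; rewrite lee_fin g0.
  have z0 : forall X : sample R d k, 0 <= (fun _ => 0 : R) X by move=> X.
  have mz : measurable_fun setT (fun _ : sample R d k => 0 : R) by exact: measurable_cst.
  have hnu0 : forall A, measurable A ->
      VSk A = (\int[Dk]_(X in A) ((fun _ => 0 : R) X)%:E)%E.
    move=> A mA; rewrite hVS // /VS -/c hsub // mul0e.
    by apply/esym; apply: integral0_eq => X _.
  rewrite -(density_change z0 mz hnu0 sp0 measurableT msp).
  rewrite integral0_eq; last by move=> X _; rewrite mule0.
  have hm : forall A, measurable A ->
      (@mzero _ (sample R d k) R) A = (\int[Dk]_(X in A) (g X)%:E)%E.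
    by move=> A mA; rewrite hsub.
  have hQ0 : (\int[Dk]_X (QB B X)%:E = 0)%E.
    under eq_integral => X _ do rewrite -hQ.
    rewrite (density_change g0 mg hm sp0 measurableT msp).
    exact: integral_measure_zero.
  move: hQ0; rewrite hchain => /eqP; rewrite mule_eq0 => /orP[/eqP hC|/eqP hI].
    have : ('C(k, d)%:R : R)%:E != 0 by rewrite eqe.
    by rewrite hC eqxx.
  by rewrite hRHS /I hI mul0e.
Qed.
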